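(* Consider an instance of the Steiner Team Orienteering Problem as described in the context, and the linear programs $\mathcal{L}_1$ and $\mathcal{L}_2$ defined there. Then $\mathcal{L}_1$ and $\mathcal{L}_2$ are equivalent: for every feasible solution $(x,y,z,\varphi)$ of $\mathcal{L}_1$ there is a feasible solution $(x,y,f,\varphi)$ of $\mathcal{L}_2$ with the same $(x,y,\varphi)$ (hence the same objective value $\sum_{i\in P}p_iy_i$), and for every feasible solution $(x,y,f,\varphi)$ of $\mathcal{L}_2$ there is a feasible solution $(x,y,z,\varphi)$ of $\mathcal{L}_1$ with the same $(x,y,\varphi)$. In particular $\mathcal{L}_1$ and $\mathcal{L}_2$ have the same optimal value.
   Context: An instance of the Steiner Team Orienteering Problem (STOP) consists of: a digraph $G=(N,A)$; an origin $s\in N$ and a destination $t\in N$ with $s\neq t$; disjoint sets $S,P\subseteq N\setminus\{s,t\}$ (mandatory and profitable vertices) with $N=S\cup P\cup\{s,t\}$; rewards $p_i\in\mathbb{Z}^+$ for $i\in P$; traverse times $d_{ij}\in\mathbb{R}^+$ for $(i,j)\in A$; a number $m$ of vehicles and a time limit $T$. For $i\in N$ let $\delta^+(i)=\{j\in N:(i,j)\in A\}$ and $\delta^-(i)=\{j\in N:(j,i)\in A\}$. For $i,j\in N$, $R_{ij}$ denotes the minimum of $\sum_{a\in A_p}d_a$ over all paths $p$ from $i$ to $j$ in $G$ (with arc set $A_p$), and $R_{ii}=0$. Common constraints (C) on variables $x\in\mathbb{R}^A$, $y\in\mathbb{R}^N$, $\varphi\in\mathbb{R}$: (C1) $y_i=1$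 for all $i\in S\cup\{s,t\}$; (C2) $\sum_{j\in\delta^+(i)}x_{ij}=y_i$ for all $i\in S\cup P$; (C3) $\sum_{j\in\delta^+(s)}x_{sj}=\sum_{i\in\delta^-(t)}x_{it}=m-\varphi$; (C4) $\sum_{i\in\delta^-(s)}x_{is}=\sum_{j\in\delta^+(t)}x_{tj}=0$; (C5) $\sum_{j\in\delta^+(i)}x_{ij}-\sum_{j\in\delta^-(i)}x_{ji}=0$ for all $i\in S\cup P$; and $0\le\varphi\le m$. Formulation $\mathcal{F}_1$: maximize $\sum_{i\in P}p_iy_i$ over $(x,y,z,\varphi)$, $z\in\mathbb{R}^A$, subject to (C); $z_{sj}=d_{sj}x_{sj}$ for all $j\in\delta^+(s)$; $\sum_{j\in\delta^+(i)}z_{ij}-\sum_{j\in\delta^-(i)}z_{ji}=\sum_{j\in\delta^+(i)}d_{ij}x_{ij}$ for all $i\in S\cup P$; $z_{ij}\le(T-R_{jt})x_{ij}$ and $z_{ij}\ge(R_{si}+d_{ij})x_{ij}$ for all $(i,j)\in A$; $x\in\{0,1\}^A$, $y\in\{0,1\}^N$, $z\ge0$. Formulation $\mathcal{F}_2$: maximize $\sum_{i\in P}p_iy_i$ over $(x,y,f,\varphi)$, $f\in\mathbb{R}^A$, subject to (C); $f_{sj}=(T-d_{sj})x_{sj}$ for all $j\in\delta^+(s)$; $\sum_{j\in\delta^-(i)}f_{ji}-\sum_{j\in\delta^+(i)}f_{ij}=\sum_{j\in\delta^+(i)}d_{ij}x_{ij}$ for all $i\in S\cup P$; $f_{ij}\le(T-R_{si}-d_{ij})x_{ij}$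 for all $(i,j)\in A$ with $i\neq s$; $f_{ij}\ge R_{jt}x_{ij}$ for all $(i,j)\in A$; $x\in\{0,1\}^A$, $y\in\{0,1\}^N$, $f\ge0$. $\mathcal{L}_1$ and $\mathcal{L}_2$ are the linear relaxations of $\mathcal{F}_1$ and $\mathcal{F}_2$, obtained by replacing $x\in\{0,1\}^A$, $y\in\{0,1\}^N$ with $0\le x\le 1$, $0\le y\le 1$. *)

(* Defs.v *)
From HB Require Import structures.
From mathcomp Require Import all_boot all_order all_algebra.
From mathcomp Require Import all_classical all_reals.
From mathcomp Require Import ereal.

Set Implicit Arguments.
Unset Strict Implicit.
Unset Printing Implicit Defensive.

Import Order.TTheory GRing.Theory Num.Theory.
Local Open Scope ring_scope.

Section STOP.
Variables (R : realType) (N : finType) (A : rel N) (d : N -> N -> R).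

Definition is_path (i j : N) (p : seq N) : bool :=
  [&& path A i p, last i p == j & uniq (i :: p)].

Definition path_len (i : N) (p : seq N) : R :=
  \sum_(e <- zip (i :: p) p) d e.1 e.2.

(* R_ij: minimum path length from i to j (an extended real, +oo if no path;
   R_ii = 0 because the only path from i to i is the trivial one). *)
Definition Rdist (i j : N) : \bar R :=
  ereal_inf [set (path_len i p)%:E | p in [set p | is_path i j p]].

Variables (s t : N) (S P : {set N}) (m : nat).

Definition outsum (v : N -> N -> R) (i : N) : R := \sum_(j | A i j) v i j.
Definition insum (v : N -> N -> R) (i : N) : R := \sum_(j | A j i) v j i.

Definition common_C (x : N -> N -> R) (y : N -> R) (phi : R) : Prop :=
  [/\ (forall i, i \in S :|: [set s; t] -> y i = 1),
      (forall i, i \in S :|: P -> outsum x i = y i),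
      outsum x s = m%:R - phi /\ insum x t = m%:R - phi,
      insum x s = 0 /\ outsum x t = 0
    & (forall i, i \in S :|: P -> outsum x i - insum x i = 0)]
  /\ 0 <= phi <= m%:R.

Definition box (x : N -> N -> R) (y : N -> R) : Prop :=
  (forall i j, A i j -> 0 <= x i j <= 1) /\ (forall i, 0 <= y i <= 1).

Definition dx (x : N -> N -> R) : N -> N -> R := fun i j => d i j * x i j.

Local Open Scope ereal_scope.

Definition L1_feasible (T : R) (x : N -> N -> R) (y : N -> R)
    (z : N -> N -> R) (phi : R) : Prop :=
  [/\ common_C x y phi,
      (forall j, A s j -> z s j = (d s j * x s j)%R),
      (forall i, i \in S :|: P ->
         (outsum z i - insum z i = outsum (dx x) i)%R),
      (forall i j, A i j -> (z i j)%:E <= (T%:E - Rdist j t) * (x i j)%:E)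
    & (forall i j, A i j -> (z i j)%:E >= (Rdist s i + (d i j)%:E) * (x i j)%:E)]
  /\ box x y /\ (forall i j, A i j -> (0 <= z i j)%R).

Definition L2_feasible (T : R) (x : N -> N -> R) (y : N -> R)
    (f : N -> N -> R) (phi : R) : Prop :=
  [/\ common_C x y phi,
      (forall j, A s j -> f s j = ((T - d s j) * x s j)%R),
      (forall i, i \in S :|: P ->
         (insum f i - outsum f i = outsum (dx x) i)%R),
      (forall i j, A i j -> i != s ->
         (f i j)%:E <= (T%:E - Rdist s i - (d i j)%:E) * (x i j)%:E)
    & (forall i j, A i j -> (f i j)%:E >= Rdist j t * (x i j)%:E)]
  /\ box x y /\ (forall i j, A i j -> (0 <= f i j)%R).

End STOP.

Definition objective (R : realType) (N : finType) (P : {set N})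
    (p : N -> nat) (y : N -> R) : R :=
  \sum_(i in P) (p i)%:R * y i.

(* Main.v *)
Require Import Defs.
From HB Require Import structures.
From mathcomp Require Import all_boot all_order all_algebra.
From mathcomp Require Import all_classical all_reals.
From mathcomp Require Import ereal.
From mathcomp Require Import ring lra.
Import Order.TTheory GRing.Theory Num.Theory.
Local Open Scope ring_scope.

Local Open Scope ereal_scope.

Lemma K1 (R : realType) (a : \bar R) (T x z f : R) :
  (0 <= x)%R -> (f + z = T * x)%R ->
  (z%:E <= (T%:E - a) * x%:E) <-> (a * x%:E <= f%:E).
Proof.
move=> hx hfz; have [x0|xp] := eqVneq x 0%R; first subst x.
  rewrite !mule0 !lee_fin; move: hfz; rewrite mulr0 => hfz; split => h; lra.
have x0 : (0 < x%:E) by rewrite lte_fin lt0r xp.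
case: a => [r| |] /=.
- rewrite -EFinB -!EFinM !lee_fin; split => h; nra.
- by rewrite addeNy gt0_mulNye // gt0_mulye.
- rewrite addey // gt0_mulNye // gt0_mulye //; split => h; by rewrite ?leey ?leNye.
Qed.

Lemma K2 (R : realType) (a : \bar R) (T x z f dd : R) :
  (0 <= x)%R -> (f + z = T * x)%R ->
  ((a + dd%:E) * x%:E <= z%:E) <-> (f%:E <= (T%:E - a - dd%:E) * x%:E).
Proof.
move=> hx hfz; have [x0|xp] := eqVneq x 0%R; first subst x.
  rewrite !mule0 !lee_fin; move: hfz; rewrite mulr0 => hfz; split => h; lra.
have x0 : (0 < x%:E) by rewrite lte_fin lt0r xp.
case: a => [r| |] /=.
- rewrite -!EFinB -EFinD -!EFinM !lee_fin; split => h; nra.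
- by rewrite addye // addeNy gt0_mulNye // gt0_mulye.
- rewrite addNye addye // gt0_mulNye // gt0_mulye //; split => h; by rewrite ?leey ?leNye.
Qed.
Local Close Scope ereal_scope.
Lemma path_len_ge0 (R : realType) (N : finType) (A : rel N) (d : N -> N -> R) :
  (forall i j, A i j -> 0 < d i j) -> forall p i, path A i p -> 0 <= path_len d i p.
Proof.
move=> hd; elim=> [|j p IH] i /=; first by rewrite /path_len big_nil.
case/andP=> hij hp; rewrite /path_len /= big_cons /=.
by apply: addr_ge0; [exact: ltW (hd _ _ hij) | exact: IH].
Qed.

Local Open Scope ereal_scope.
Lemma Rdist_ge0 (R : realType) (N : finType) (A : rel N) (d : N -> N -> R) :
  (forall i j, A i j -> (0 < d i j)%R) -> forall i j, 0 <= Rdist A d i j.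
Proof.
move=> hd i j; rewrite /Rdist. apply: (@le_ereal_inf_tmp R).
move=> y [p /and3P[hp _ _] <-].
have := @path_len_ge0 _ _ _ _ hd _ _ hp. by rewrite -lee_fin.
Qed.

Lemma Rdist_ii (R : realType) (N : finType) (A : rel N) (d : N -> N -> R) i :
  Rdist A d i i <= 0.
Proof.
apply: ge_ereal_inf; exists (path_len d i [::])%:E.
  by exists [::] => //=; rewrite /is_path /= eqxx.
by rewrite /path_len big_nil.
Qed.
Local Close Scope ereal_scope.

Lemma sumB (R : realType) (N : finType) (A : rel N) (T : R) (x z : N -> N -> R) k :
  outsum A (fun i j => T * x i j - z i j) k = T * outsum A x k - outsum A z k /\
  insum A (fun i j => T * x i j - z i j) k = T * insum A x k - insum A z k.
Proof. by rewrite /outsum /insum !sumrB !mulr_sumr. Qed.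

Theorem theorem1 (R : realType) (N : finType) (A : rel N)
    (s t : N) (S P : {set N}) (p : N -> nat) (d : N -> N -> R)
    (m : nat) (T : R) :
  s != t ->
  [disjoint S & P] ->
  s \notin S :|: P -> t \notin S :|: P ->
  (forall i : N, i \in S :|: P :|: [set s; t]) ->
  (forall i, i \in P -> (0 < p i)%N) ->
  (forall i j, A i j -> 0 < d i j) ->
  (forall x y z phi, L1_feasible A d s t S P m T x y z phi ->
     exists f, L2_feasible A d s t S P m T x y f phi) /\
  (forall x y f phi, L2_feasible A d s t S P m T x y f phi ->
     exists z, L1_feasible A d s t S P m T x y z phi) /\
  (forall v : R,
     (exists x y z phi, L1_feasible A d s t S P m T x y z phi /\
        objective P p y = v) <->
     (exists x y f phi, L2_feasible A d s t S P m T x y f phi /\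
        objective P p y = v)).
Proof.
move=> _ _ _ _ _ _ hd.
have P1 : forall x y z phi, L1_feasible A d s t S P m T x y z phi ->
     exists f, L2_feasible A d s t S P m T x y f phi.
  move=> x y z phi [[hC hs hcons hub hlb] [[hx hy] hz0]].
  have hC' := hC; case: hC' => [[_ _ _ _ h5] _].
  exists (fun i j => T * x i j - z i j); split; [split|split] => //.
  - by move=> j hj; rewrite hs //; ring.
  - move=> i hi; have [-> ->] := @sumB _ _ A T x z i.
    have := hcons i hi; have := h5 i hi; set a := outsum A x i; set b := insum A x i.
    move=> e1 e2; rewrite -e2.
    have -> : b = a by apply/eqP; rewrite eq_sym -subr_eq0 e1.
    ring.
  - move=> i j hij _; have hx0 := (andP (hx i j hij)).1.
    by apply/(@K2 R _ T (x i j) (z i j)) => //; [ring | exact: hlb].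
  - move=> i j hij; have hx0 := (andP (hx i j hij)).1.
    by apply/(@K1 R _ T (x i j) (z i j)) => //; [ring | exact: hub].
  - move=> i j hij; have hx0 := (andP (hx i j hij)).1.
    rewrite -lee_fin; apply: le_trans (_ : (Rdist A d j t * (x i j)%:E <= _)%E).
      by apply: mule_ge0; [exact: Rdist_ge0 | rewrite lee_fin].
    by apply/(@K1 R _ T (x i j) (z i j)) => //; [ring | exact: hub].
have P2 : forall x y f phi, L2_feasible A d s t S P m T x y f phi ->
     exists z, L1_feasible A d s t S P m T x y z phi.
  move=> x y f phi [[hC hs hcons hub hlb] [[hx hy] hz0]].
  have hC' := hC; case: hC' => [[_ _ _ _ h5] _].
  have hlb' : forall i j, A i j -> ((Rdist A d s i + (d i j)%:E) * (x i j)%:E <= (T * x i j - f i j)%:E)%E.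
    move=> i j hij; have hx0 := (andP (hx i j hij)).1.
    have [e|ns] := eqVneq i s; first subst i.
      have -> : Rdist A d s s = 0%E by apply/le_anti; rewrite Rdist_ii Rdist_ge0.
      have e : (T * x s j - (T - d s j) * x s j = d s j * x s j)%R by ring.
      rewrite add0e hs //.
      apply: (@le_trans _ _ ((d s j * x s j)%R)%:E); first by rewrite EFinM.
      by rewrite lee_fin le_eqVlt; apply/orP; left; apply/eqP; ring.
    by apply/(@K2 R _ T (x i j) _ (f i j)) => //; [ring | exact: hub].
  exists (fun i j => T * x i j - f i j); split; [split|split] => //.
  - by move=> j hj; rewrite hs //; ring.
  - move=> i hi; have [-> ->] := @sumB _ _ A T x f i.
    have := hcons i hi; have := h5 i hi; set a := outsum A x i; set b := insum A x i.
    move=> e1 e2; rewrite -e2.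
    have -> : b = a by apply/eqP; rewrite eq_sym -subr_eq0 e1.
    ring.
  - move=> i j hij; have hx0 := (andP (hx i j hij)).1.
    by apply/(@K1 R _ T (x i j) _ (f i j)) => //; [ring | exact: hlb].
  - move=> i j hij; have hx0 := (andP (hx i j hij)).1.
    rewrite -lee_fin; apply: le_trans (hlb' i j hij).
    apply: mule_ge0; last by rewrite lee_fin.
    by apply: adde_ge0; [exact: Rdist_ge0 | rewrite lee_fin ltW // hd].
split => //; split => // v; split.
  by move=> [x [y [z [phi [h <-]]]]]; have [f hf] := P1 _ _ _ _ h; exists x, y, f, phi.
by move=> [x [y [f [phi [h <-]]]]]; have [z hz] := P2 _ _ _ _ h; exists x, y, z, phi.
Qed.
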